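(* Let $n\geq1$ be an integer, let $R$ be a commutative ring in which $(n-1)!$ is invertible, and let $M$ be an $R$-module. Then the $R$-module $\Gamma^n_R(M)$ is generated by the pure symbols $[x]_n$, $x\in M$. Furthermore, for every submodule $N\subset M$, the kernel of the natural reduction $\rho:\Gamma^n_R(M)\to\Gamma^n_R(M/N)$ is generated (as an $R$-module) by the elements $[x+y]_n-[x]_n$ for $x\in M$ and $y\in N$.
   Context: $\Gamma^n_R(M)$ denotes the $n$-th divided power of the $R$-module $M$ (degree-$n$ part of the divided power algebra), with $[x]_n$ the $n$-th divided power of $x$. *)

(* Defs.v *)
From mathcomp Require Import all_boot all_order all_algebra.
Set Implicit Arguments.
Unset Strict Implicit.
Unset Printing Implicit Defensive.
Import GRing.Theory.
Local Open Scope ring_scope.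

(* Divided power algebra Gamma_R(M), following Roby's presentation:
   the commutative R-algebra generated by symbols x^[k] (x in M, k : nat)
   subject to
     x^[0] = 1,  (r x)^[k] = r^k x^[k],  x^[k] x^[l] = C(k+l,k) x^[k+l],
     (x+y)^[k] = sum_{i+j=k} x^[i] y^[j].
   Elements are represented by formal terms; equality in Gamma is the
   congruence [deq] generated by the commutative R-algebra axioms and the
   relations above.  To also represent Gamma_R(M/N) (M/N as the setoid M
   modulo N) the relation is parameterized by a predicate N and includes
   x^[k] = y^[k] whenever x - y \in N.  Gamma_R(M) is the case N = {0}. *)

Inductive dterm (R M : Type) : Type :=
| DGen of M & nat
| DZero
| DOne
| DAdd of dterm R M & dterm R M
| DOpp of dterm R M
| DMul of dterm R M & dterm R M
| DScale of R & dterm R M.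

Arguments DZero {R M}.
Arguments DOne {R M}.
Arguments DGen {R M}.
Arguments DAdd {R M}.
Arguments DOpp {R M}.
Arguments DMul {R M}.
Arguments DScale {R M}.

Definition dsum (R M : Type) (s : seq (dterm R M)) : dterm R M :=
  foldr (@DAdd R M) DZero s.

Section DP.
Variables (R : comPzRingType) (M : lmodType R) (N : M -> Prop).

Local Notation term := (dterm R M).

Inductive deq : term -> term -> Prop :=
| deq_refl t : deq t t
| deq_sym t u : deq t u -> deq u t
| deq_trans t u v : deq t u -> deq u v -> deq t v
| deq_add t t' u u' : deq t t' -> deq u u' -> deq (DAdd t u) (DAdd t' u')
| deq_opp t t' : deq t t' -> deq (DOpp t) (DOpp t')
| deq_mul t t' u u' : deq t t' -> deq u u' -> deq (DMul t u) (DMul t' u')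
| deq_scale r t t' : deq t t' -> deq (DScale r t) (DScale r t')
| deq_addA t u v : deq (DAdd t (DAdd u v)) (DAdd (DAdd t u) v)
| deq_addC t u : deq (DAdd t u) (DAdd u t)
| deq_add0 t : deq (DAdd DZero t) t
| deq_addN t : deq (DAdd (DOpp t) t) DZero
| deq_mulA t u v : deq (DMul t (DMul u v)) (DMul (DMul t u) v)
| deq_mulC t u : deq (DMul t u) (DMul u t)
| deq_mul1 t : deq (DMul DOne t) t
| deq_mulDl t u v : deq (DMul (DAdd t u) v) (DAdd (DMul t v) (DMul u v))
| deq_scaleA r s t : deq (DScale r (DScale s t)) (DScale (r * s) t)
| deq_scale1 t : deq (DScale 1 t) t
| deq_scaleDl r s t : deq (DScale (r + s) t) (DAdd (DScale r t) (DScale s t))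
| deq_scaleDr r t u : deq (DScale r (DAdd t u)) (DAdd (DScale r t) (DScale r u))
| deq_scaleMl r t u : deq (DScale r (DMul t u)) (DMul (DScale r t) u)
| deq_gen0 x : deq (DGen x 0) DOne
| deq_genZ r x k : deq (DGen (r *: x) k) (DScale (r ^+ k) (DGen x k))
| deq_genM x k l :
    deq (DMul (DGen x k) (DGen x l)) (DScale ('C(k + l, k))%:R (DGen x (k + l)))
| deq_genD x y k :
    deq (DGen (x + y) k)
        (dsum [seq DMul (DGen x i) (DGen y (k - i)) | i <- iota 0 k.+1])
| deq_genN x y k : N (x - y) -> deq (DGen x k) (DGen y k).

End DP.

Inductive dhom (R M : Type) : nat -> dterm R M -> Prop :=
| dhom_gen x k : dhom k (DGen x k)
| dhom_zero n : dhom n DZero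
| dhom_one : dhom 0 DOne
| dhom_add n t u : dhom n t -> dhom n u -> dhom n (DAdd t u)
| dhom_opp n t : dhom n t -> dhom n (DOpp t)
| dhom_mul n m t u : dhom n t -> dhom m u -> dhom (n + m) (DMul t u)
| dhom_scale n r t : dhom n t -> dhom n (DScale r t).

Definition gamma_eq (R : comPzRingType) (M : lmodType R) : dterm R M -> dterm R M -> Prop :=
  deq (fun x : M => x = 0).

(* Equality in Gamma_R(M/N), terms over M representing terms over M/N
   (the natural reduction rho is the identity on representing terms). *)
Definition gamma_quot_eq (R : comPzRingType) (M : lmodType R) (N : M -> Prop)
  : dterm R M -> dterm R M -> Prop := deq N.

Definition is_submodule (R : comPzRingType) (M : lmodType R) (N : M -> Prop) :=
  [/\ N 0, (forall x y, N x -> N y -> N (x + y)) & (forall (r : R) x, N x -> N (r *: x))].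

(* Main.v *)
From HB Require Import structures.
Require Import Defs.
From mathcomp Require Import all_boot all_order all_algebra.
From mathcomp Require Import zify.
From mathcomp Require boolp.
Import GRing.Theory.
Local Open Scope ring_scope.
Set Implicit Arguments.
Unset Strict Implicit.
Unset Printing Implicit Defensive.

Section Quot.
Variables (R : comPzRingType) (M : lmodType R) (N : M -> Prop).
Local Notation term := (dterm R M).
Local Notation deqN := (deq N).

Definition Qt := {A : term -> Prop | exists t, A = deqN t}.
Definition cls (t : term) : Qt := exist _ (deqN t) (ex_intro _ t erefl).
Definition qrepr (q : Qt) : term := proj1_sig (boolp.cid (proj2_sig q)).

Lemma deq_iff t u : deqN t u -> forall v, deqN t v <-> deqN u v.
Proof. by move=> h v; split=> h'; [apply: deq_trans (deq_sym h) h' | apply: deq_trans h h']. Qed.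

Lemma cls_eq t u : cls t = cls u <-> deqN t u.
Proof.
split=> [h|h].
  have := congr1 (@proj1_sig _ _) h => /= e.
  have : deqN u u by constructor.
  by rewrite -e.
rewrite /cls; have e : deqN t = deqN u.
  by apply: boolp.funext => v; apply: boolp.propext; apply: deq_iff.
move: (ex_intro _ t erefl : exists t', deqN t = deqN t').
rewrite e => p.
by congr exist; apply: boolp.Prop_irrelevance.
Qed.

Lemma qreprK q : cls (qrepr q) = q.
Proof.
case: q => A pA; rewrite /qrepr /=.
case: (boolp.cid pA) => t /= e; subst A.
by congr exist; apply: boolp.Prop_irrelevance.
Qed.

Lemma qrepr_cls t : deqN (qrepr (cls t)) t.
Proof. by apply/cls_eq; rewrite qreprK. Qed.

Lemma qtind (P : Qt -> Prop) : (forall t, P (cls t)) -> forall q, P q.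
Proof. by move=> h q; rewrite -(qreprK q). Qed.

HB.instance Definition _ := boolp.gen_eqMixin Qt.
HB.instance Definition _ := boolp.gen_choiceMixin Qt.

Definition qadd a b := cls (DAdd (qrepr a) (qrepr b)).
Definition qopp a := cls (DOpp (qrepr a)).
Definition qmul a b := cls (DMul (qrepr a) (qrepr b)).
Definition qzero := cls DZero.
Definition qone := cls DOne.

Lemma qaddE t u : qadd (cls t) (cls u) = cls (DAdd t u).
Proof. by apply/cls_eq; apply: deq_add; apply: qrepr_cls. Qed.
Lemma qoppE t : qopp (cls t) = cls (DOpp t).
Proof. by apply/cls_eq; apply: deq_opp; apply: qrepr_cls. Qed.
Lemma qmulE t u : qmul (cls t) (cls u) = cls (DMul t u).
Proof. by apply/cls_eq; apply: deq_mul; apply: qrepr_cls. Qed.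

Lemma qaddA : associative qadd.
Proof.
by elim/qtind=> a; elim/qtind=> b; elim/qtind=> c; rewrite !qaddE; apply/cls_eq; constructor.
Qed.
Lemma qaddC : commutative qadd.
Proof. by elim/qtind=> a; elim/qtind=> b; rewrite !qaddE; apply/cls_eq; constructor. Qed.
Lemma qadd0 : left_id qzero qadd.
Proof. by elim/qtind=> a; rewrite qaddE; apply/cls_eq; constructor. Qed.
Lemma qaddN : left_inverse qzero qopp qadd.
Proof. by elim/qtind=> a; rewrite qoppE qaddE; apply/cls_eq; constructor. Qed.

HB.instance Definition _ := GRing.isZmodule.Build Qt qaddA qaddC qadd0 qaddN.

Lemma qmulA : associative qmul.
Proof.
by elim/qtind=> a; elim/qtind=> b; elim/qtind=> c; rewrite !qmulE; apply/cls_eq; constructor.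
Qed.
Lemma qmulC : commutative qmul.
Proof. by elim/qtind=> a; elim/qtind=> b; rewrite !qmulE; apply/cls_eq; constructor. Qed.
Lemma qmul1 : left_id qone qmul.
Proof. by elim/qtind=> a; rewrite qmulE; apply/cls_eq; constructor. Qed.
Lemma qmulDl : left_distributive qmul qadd.
Proof.
by elim/qtind=> a; elim/qtind=> b; elim/qtind=> c; rewrite !(qmulE, qaddE); apply/cls_eq; constructor.
Qed.

HB.instance Definition _ := GRing.Zmodule_isComPzRing.Build Qt qmulA qmulC qmul1 qmulDl.


Local Notation Q := Qt.
Definition qi (r : R) : Q := cls (DScale r DOne).
Definition G (x : M) (k : nat) : Q := cls (DGen x k).

Lemma cls0 : cls DZero = 0. Proof. by []. Qed.
Lemma cls1 : cls DOne = 1. Proof. by []. Qed.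
Lemma clsD t u : cls (DAdd t u) = cls t + cls u.
Proof. by rewrite -qaddE. Qed.
Lemma clsN t : cls (DOpp t) = - cls t.
Proof. by rewrite -qoppE. Qed.
Lemma clsM t u : cls (DMul t u) = cls t * cls u.
Proof. by rewrite -qmulE. Qed.
Lemma clsZ r t : cls (DScale r t) = qi r * cls t.
Proof.
rewrite /qi; change (cls (DScale r t) = qmul (cls (DScale r DOne)) (cls t)); rewrite qmulE; apply/cls_eq.
apply: (@deq_trans _ _ N _ (DScale r (DMul DOne t))); last by apply: deq_scaleMl.
by apply: deq_scale; apply: deq_sym; apply: deq_mul1.
Qed.
Lemma qi1 : qi 1 = 1.
Proof. by apply/cls_eq; apply: deq_scale1. Qed.
Lemma qiD r s : qi (r + s) = qi r + qi s.
Proof. by rewrite /qi -clsD; apply/cls_eq; apply: deq_scaleDl. Qed.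
Lemma qiM r s : qi (r * s) = qi r * qi s.
Proof.
by rewrite /qi -clsZ; apply/cls_eq; apply: deq_sym; apply: deq_scaleA.
Qed.
Lemma qi0 : qi 0 = 0.
Proof. by apply: (addrI (qi 0)); rewrite -qiD !addr0. Qed.
Lemma qiN r : qi (- r) = - qi r.
Proof. by apply/eqP; rewrite -subr_eq0 opprK -qiD addNr qi0. Qed.
Lemma qinat k : qi k%:R = k%:R.
Proof. by elim: k => [|k IH]; rewrite ?qi0 // !mulrS qiD qi1 IH. Qed.
Lemma qiX r k : qi (r ^+ k) = qi r ^+ k.
Proof. by elim: k => [|k IH]; rewrite ?qi1 // !exprS qiM IH. Qed.

Lemma G0 x : G x 0 = 1.
Proof. by apply/cls_eq; apply: deq_gen0. Qed.
Lemma GZ r x k : G (r *: x) k = qi r ^+ k * G x k.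
Proof. by rewrite -qiX -clsZ; apply/cls_eq; apply: deq_genZ. Qed.
Lemma GM x k l : G x k * G x l = ('C(k + l, k))%:R * G x (k + l).
Proof. by rewrite -qinat -clsZ -clsM; apply/cls_eq; apply: deq_genM. Qed.
Lemma cls_dsum (T : Type) (f : T -> term) s :
  cls (dsum (map f s)) = \sum_(i <- s) cls (f i).
Proof. by elim: s => [|a s IH]; rewrite ?big_nil // big_cons /= clsD IH. Qed.
Lemma GD x y k : G (x + y) k = \sum_(i < k.+1) G x i * G y (k - i).
Proof.
have := @deq_genD R M N x y k; move/cls_eq; rewrite -/(G _ _) => ->.
rewrite cls_dsum -(big_mkord xpredT (fun i => G x i * G y (k - i))) /index_iota subn0.
by apply: eq_bigr => i _; rewrite clsM.
Qed.
Lemma GN x y k : N (x - y) -> G x k = G y k.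
Proof. by move=> h; apply/cls_eq; apply: deq_genN. Qed.

End Quot.


Section FD.
Variables (Q : comPzRingType) (V U : Q -> Prop).
Hypotheses (V0 : V 0) (VD : forall a b, V a -> V b -> V (a + b))
  (VN : forall a, V a -> V (- a)) (VU : forall u a, U u -> V a -> V (u * a)).

Lemma Vsum I r (P : pred I) (F : I -> Q) :
  (forall i, P i -> V (F i)) -> V (\sum_(i <- r | P i) F i).
Proof. by move=> h; apply: (big_ind V) => //. Qed.

Lemma Vnat k a : V a -> V (k%:R * a).
Proof. by move=> h; rewrite mulr_natl; elim: k => [|k IH]; rewrite ?mulr0n // mulrS; apply: VD. Qed.

Lemma Vsubr a b : V (a + b) -> V b -> V a.
Proof. by move=> h1 h2; rewrite -(addrK b a); apply: VD => //; apply: VN. Qed.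

Lemma fd m (A : nat -> Q) :
  (forall k, (0 < k < m)%N -> exists u, U u /\ u * k%:R = 1) ->
  (forall c : nat, V (\sum_(i < m.+1) (c%:R ^+ i) * A i)) -> V (A m) ->
  forall i, (i <= m)%N -> V (A i).
Proof.
elim: m A => [|m IH] A hu hp hm.
  by case.
pose A' (i : nat) := \sum_(j < m.+2 | (i < j)%N) ('C(j, i))%:R * A j.
have hB : forall j : 'I_m.+2, \sum_(i < m.+2) ('C(i, j))%:R * A i = A j + A' j.
  move=> j; rewrite (bigID (fun i : 'I_m.+2 => (j < i)%N)) /= addrC; congr (_ + _).
  rewrite (bigD1 j) ?ltnn //= binn mul1r big1 ?addr0 // => i /andP[h1 h2].
  by rewrite bin_small ?mul0r // ltn_neqAle val_eqE h2 leqNgt.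
have hp' : forall c : nat, V (\sum_(i < m.+1) (c%:R ^+ i) * A' i).
  move=> c.
  have e : \sum_(i < m.+2) (c.+1%:R ^+ i) * A i =
           \sum_(i < m.+2) (c%:R ^+ i) * A i + \sum_(i < m.+1) (c%:R ^+ i) * A' i.
    have e1 : forall i : 'I_m.+2, c.+1%:R ^+ i =
        \sum_(j < m.+2) (c%:R ^+ j) * ('C(i, j))%:R :> Q.
      move=> i; rewrite mulrSr exprD1n (big_ord_widen m.+2 (fun j => c%:R ^+ j *+ 'C(i, j))) ?ltn_ord // big_mkcond /=.
      apply: eq_bigr => j _; rewrite mulr_natr; case: ifP => // /negbT; rewrite -leqNgt => hj.
      by rewrite bin_small ?mulr0n.
    under eq_bigr => i _ do rewrite e1 mulr_suml.
    rewrite exchange_big /=.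
    under eq_bigr => j _ do (under eq_bigr => i _ do rewrite -mulrA; rewrite -mulr_sumr).
    under eq_bigr => j _ do rewrite hB mulrDr.
    rewrite big_split /=; congr (_ + _).
    have hz : A' m.+1 = 0.
      by rewrite /A' big1 // => -[i hi] /=; rewrite ltnNge -ltnS hi.
    by rewrite big_ord_recr /= hz mulr0 addr0.
  have := hp c.+1; rewrite e addrC => h.
  by apply: (Vsubr h); apply: hp.
have hA'm : V (A' m).
  rewrite /A' (big_pred1 ord_max) /=; first by rewrite binSn; apply: Vnat.
  by move=> i; rewrite /= -val_eqE /=; have := ltn_ord i; lia.
have hA' := IH A' (fun k hk => hu k (ltac:(lia))) hp' hA'm.
have H : forall d, (d <= m)%N -> forall i, (m.+1 - d <= i <= m.+1)%N -> V (A i).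
  elim=> [|d IHd] hd i /andP[h1 h2].
    have -> : i = m.+1 by lia.
    by [].
  have [hi|hi] := ltnP (m - d) i.
    by apply: IHd; [lia | apply/andP; split; lia].
  have ei : i = (m - d)%N by lia.
  case: (hu i (ltac:(lia))) => u [hU hu1].
  have hV : V (i%:R * A i).
    have := hA' (i.-1) (ltac:(lia)).
    rewrite /A'.
    have hiI : (i < m.+2)%N by lia.
    rewrite (bigD1 (Ordinal hiI)) /=; last by lia.
    have -> : (i.-1.+1 = i)%N by lia.
    have i0 : (0 < i)%N by lia.
    have -> : 'C(i, i.-1) = i by rewrite -{1}(prednK i0) binSn prednK.
    move/Vsubr; apply.
    apply: Vsum => j /andP[hj1 hj2]; apply: Vnat; apply: IHd; first by lia.
    have hj3 : (nat_of_ord j != i) by rewrite -val_eqE /= in hj2.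
    move: (ltn_ord j) => hj4; apply/andP; split; lia.
  by rewrite -[A i]mul1r -hu1 -mulrA; apply: VU.
move=> [|i] hi.
  by have := hp 0%N; rewrite big_ord_recl /= expr0 mul1r big1 ?addr0 // => j _; rewrite exprS mul0r mul0r.
by apply: (H m) => //; lia.
Qed.
End FD.


Section Main.
Variables (R : comPzRingType) (M : lmodType R).
Local Notation term := (dterm R M).
Local Notation N0 := (fun x : M => x = 0).

Fixpoint eps (t : term) : R :=
  match t with
  | DGen _ k => if k is 0 then 1 else 0
  | DZero => 0
  | DOne => 1
  | DAdd a b => eps a + eps b
  | DOpp a => - eps a
  | DMul a b => eps a * eps b
  | DScale r a => r * eps a
  end.

Lemma eps_dsum (T : Type) (f : T -> term) s :
  eps (dsum (map f s)) = \sum_(i <- s) eps (f i).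
Proof. by elim: s => [|a s IH]; rewrite ?big_nil // big_cons /= IH. Qed.

Lemma eps_deq t u : deq N0 t u -> eps t = eps u.
Proof.
elim=> //=.
all: try (by move=> *; congruence).
all: try (by move=> *; rewrite ?(addrA, add0r, addNr, mulrA, mul1r, mulrDl, mulrDr)).
all: try (by move=> *; rewrite addrC).
all: try (by move=> *; rewrite mulrC).
- by move=> r x [|k] /=; rewrite ?expr0 ?mulr1 ?mulr0.
- by move=> x [|k] [|l] /=; rewrite ?mulr1 ?mulr0 ?mul0r ?bin0 ?mulr0.
- move=> x y k; rewrite eps_dsum; case: k => [|k]; first by rewrite /= big_nil mulr1 addr0.
  rewrite subn0 /= mulr0 add0r big1_seq // => -[|i]; last by rewrite mul0r.
  by rewrite /= in_cons mem_iota.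
Qed.

Section NZ.
Hypothesis hR : (1 : R) != 0.

Lemma Q0nz : (1 : Qt N0) != 0.
Proof.
apply/negP => /eqP /(cls_eq N0) /eps_deq /= h.
by move: hR; rewrite h eqxx.
Qed.

Definition Qn := Qt N0.
HB.instance Definition _ := GRing.ComPzRing.on Qn.
HB.instance Definition _ := GRing.PzSemiRing_isNonZero.Build Qn Q0nz.

Local Notation io := (qi N0).
Local Notation GG := (@G R M N0).
Local Notation cl := (@cls R M N0).

Fixpoint Phi (t : term) : {poly Qn} :=
  match t with
  | DGen x k => (GG x k : Qn) *: 'X^k
  | DZero => 0
  | DOne => 1
  | DAdd a b => Phi a + Phi b
  | DOpp a => - Phi a
  | DMul a b => Phi a * Phi b
  | DScale r a => (io r : Qn) *: Phi a
  end.

Lemma Phi_dsum (T : Type) (f : T -> term) s :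
  Phi (dsum (map f s)) = \sum_(i <- s) Phi (f i).
Proof. by elim: s => [|a s IH]; rewrite ?big_nil // big_cons /= IH. Qed.

Lemma Phi_deq t u : deq N0 t u -> Phi t = Phi u.
Proof.
elim=> //.
all: try (by move=> * /=; congruence).
all: try (by move=> x y k h; have -> : x = y by apply/eqP; rewrite -subr_eq0 h).
all: try (by move=> * /=; rewrite ?(addrA, add0r, addNr, mulrA, mul1r, mulrDl, mulrDr)).
all: try (by move=> * /=; rewrite addrC).
all: try (by move=> * /=; rewrite mulrC).
all: try (by move=> * /=; rewrite scalerA qiM).
all: try (by move=> * /=; rewrite qi1 scale1r).
all: try (by move=> r0 s0 t0 /=; rewrite -scalerDl; congr (_ *: _); apply: qiD).
all: try (by move=> * /=; rewrite scalerDr).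
all: try (by move=> * /=; rewrite scalerAl).
all: try (by move=> x /=; rewrite G0 expr0 scale1r).
all: try (by move=> r x k /=; rewrite GZ scalerA qiX).
- move=> x k l /=; rewrite -scalerAl -scalerAr scalerA -exprD scalerA.
  by congr (_ *: _); rewrite GM qinat.
- move=> x y k; rewrite Phi_dsum [LHS]/= GD.
  rewrite [iota 0 k.+1](_ : _ = index_iota 0 k.+1); last by rewrite /index_iota subn0.
  rewrite big_mkord scaler_suml.
  apply: eq_bigr => i _ /=.
  by rewrite -scalerAl -scalerAr scalerA -exprD subnKC // -ltnS.
Qed.

Inductive Span (P : Qn -> Prop) : Qn -> Prop :=
| Sp0 : Span P 0
| SpD a b : Span P a -> Span P b -> Span P (a + b)
| SpG r g : P g -> Span P (io r * g).

Lemma SpU P r a : Span P a -> Span P (io r * a).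
Proof.
elim=> [|b c _ hb _ hc|s g hg]; first by rewrite mulr0; apply: Sp0.
  by rewrite mulrDr; apply: SpD.
by rewrite mulrA -qiM; apply: SpG.
Qed.

Lemma SpN P a : Span P a -> Span P (- a).
Proof. by move=> h; rewrite -mulN1r -qi1 -qiN; apply: SpU. Qed.

Lemma Spsum P I r (Q : pred I) (F : I -> Qn) :
  (forall i, Q i -> Span P (F i)) -> Span P (\sum_(i <- r | Q i) F i).
Proof. by move=> h; apply: (big_ind (Span P)) => //; [apply: Sp0 | apply: SpD]. Qed.

Lemma SpG1 P g : P g -> Span P g.
Proof. by move=> h; rewrite -[g]mul1r -qi1; apply: SpG. Qed.

Definition UH m := forall k, (0 < k < m)%N -> exists r : R, r * k%:R = 1.

Lemma UH_le m m' : (m' <= m)%N -> UH m -> UH m'.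
Proof. by move=> h hu k hk; apply: hu; lia. Qed.

Lemma fdS P m (A : nat -> Qn) : UH m ->
  (forall c : nat, Span P (\sum_(i < m.+1) (c%:R ^+ i) * A i)) -> Span P (A m) ->
  forall i, (i <= m)%N -> Span P (A i).
Proof.
move=> hu; apply: (@fd _ (Span P) (fun u => exists r, u = io r)).
- exact: Sp0.
- exact: SpD.
- exact: SpN.
- by move=> u a [r ->]; apply: SpU.
- move=> k hk; case: (hu k hk) => r hr; exists (io r); split; first by exists r.
  by rewrite -[k%:R](qinat N0) -qiM hr qi1.
Qed.

Lemma Lexp w z m (c : nat) :
  GG (w + c%:R *: z) m = \sum_(i < m.+1) (c%:R : Qn) ^+ i * (GG w (m - i) * GG z i).
Proof.
rewrite GD (reindex_inj rev_ord_inj) /=; apply: eq_bigr => i _.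
rewrite GZ qinat subSS subKn; last by rewrite -ltnS.
by rewrite mulrCA.
Qed.

Definition Vg m (g : Qn) := exists x, g = GG x m.

Lemma L4 a b x y : UH (a + b) -> Span (Vg (a + b)) (GG x a * GG y b).
Proof.
move=> hu.
have h := @fdS (Vg (a + b)) (a + b) (fun i => GG y (a + b - i) * GG x i) hu.
rewrite mulrC -{2}(addKn a b); apply: h; last by rewrite leq_addr.
- by move=> c; rewrite -Lexp; apply: SpG1; eexists.
- by rewrite subnn G0 mul1r; apply: SpG1; eexists.
Qed.

Lemma Vmul a b p q : UH (a + b) -> Span (Vg a) p -> Span (Vg b) q -> Span (Vg (a + b)) (p * q).
Proof.
move=> hu hp hq; elim: hp => [|p1 p2 _ h1 _ h2|r g [x ->]].
- by rewrite mul0r; apply: Sp0.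
- by rewrite mulrDl; apply: SpD.
elim: hq => [|q1 q2 _ h1 _ h2|s g' [y ->]].
- by rewrite mulr0; apply: Sp0.
- by rewrite mulrDr; apply: SpD.
rewrite mulrACA -qiM; apply: SpU; apply: L4; exact: hu.
Qed.

Lemma coefV t j : UH j -> Span (Vg j) ((Phi t)`_j).
Proof.
elim: t j => [x k|||a IHa b IHb|a IHa|a IHa b IHb|r a IHa] j hu /=.
- rewrite coefZ coefXn; case: eqP => [->|_]; rewrite ?mulr1 ?mulr0; last exact: Sp0.
  by apply: SpG1; eexists.
- by rewrite coef0; apply: Sp0.
- rewrite coef1; case: eqP => [->|_]; last exact: Sp0.
  by apply: SpG1; exists 0; rewrite G0.
- by rewrite coefD; apply: SpD; [apply: IHa | apply: IHb].
- by rewrite coefN; apply: SpN; apply: IHa.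
- rewrite coefM; apply: Spsum => i _.
  have hi : (i <= j)%N by rewrite -ltnS.
  have e : (i + (j - i) = j)%N by rewrite subnKC.
  rewrite -[in Vg j]e; apply: Vmul; rewrite ?e //.
    by apply: IHa; apply: UH_le hu.
  by apply: IHb; apply: UH_le hu; rewrite leq_subr.
- by rewrite coefZ; apply: SpU; apply: IHa.
Qed.

Lemma Phi_hom n t : dhom n t -> Phi t = (cl t : Qn) *: 'X^n.
Proof.
elim=> {n t} /=.
- by [].
- by move=> n; rewrite cls0 scale0r.
- by rewrite cls1 scale1r expr0.
- by move=> n t u _ -> _ ->; rewrite clsD scalerDl.
- by move=> n t _ ->; rewrite clsN scaleNr.
- move=> n m t u _ -> _ ->; rewrite clsM -scalerAl -scalerAr scalerA exprD.
  by [].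
- by move=> n r t _ ->; rewrite clsZ scalerA.
Qed.

Lemma part1 n t : UH n -> dhom n t -> Span (Vg n) (cl t).
Proof.
move=> hu ht; have := coefV t hu.
by rewrite (Phi_hom ht) coefZ coefXn eqxx mulr1.
Qed.

Lemma extract1 n q : Span (Vg n) q ->
  exists s : seq (R * M), q = cl (dsum [seq DScale p.1 (DGen p.2 n) | p <- s]).
Proof.
elim=> [|a b _ [s1 ->] _ [s2 ->]|r g [x ->]].
- by exists [::].
- by exists (s1 ++ s2); rewrite !cls_dsum big_cat.
- by exists [:: (r, x)]; rewrite cls_dsum big_seq1 clsZ.
Qed.


Section P2.
Variables (N : M -> Prop) (hN : is_submodule N) (n : nat).
Hypotheses (hn : (0 < n)%N) (hu : UH n).

Definition Kg (g : Qn) := exists x y, N y /\ g = GG (x + y) n - GG x n.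

Lemma Nscale r y : N y -> N (r *: y).
Proof. by case: hN => _ _; apply. Qed.

Lemma G0n : GG 0 n = 0.
Proof.
have := GZ N0 0 0 n; rewrite scale0r qi0 expr0n eqn0Ngt hn /= mul0r.
by [].
Qed.

Lemma L3 w z i : N z -> (0 < i <= n)%N -> Span Kg (GG w (n - i) * GG z i).
Proof.
move=> hz /andP[hi1 hi2].
pose A (i : nat) : Qn := if i == 0%N then 0 else GG w (n - i) * GG z i.
have := @fdS Kg n A hu _ _ i hi2; rewrite /A (negbTE (lt0n_neq0 hi1)); apply.
- move=> c; rewrite big_ord_recl /= mulr0 add0r.
  have := Lexp w z n c; rewrite big_ord_recl /= expr0 mul1r subn0 G0 mulr1 => e.
  have -> : \sum_(i0 < n) (c%:R : Qn) ^+ (bump 0 i0) * A (bump 0 i0) =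
            GG (w + c%:R *: z) n - GG w n.
    rewrite e (addrC (GG w n)) addrK; apply: eq_bigr => i0 _.
    by rewrite /A /bump /=.
  by apply: SpG1; exists w, (c%:R *: z); split => //; apply: Nscale.
- rewrite (negbTE (lt0n_neq0 hn)) subnn G0 mul1r.
  apply: SpG1; exists 0, z; split => //.
  by rewrite add0r G0n subr0.
Qed.

Lemma L3' l v z : N z -> (0 < l <= n)%N -> Span (Vg (n - l)) v -> Span Kg (v * GG z l).
Proof.
move=> hz hl; elim=> [|a b _ ha _ hb|r g [w ->]].
- by rewrite mul0r; apply: Sp0.
- by rewrite mulrDl; apply: SpD.
by rewrite -mulrA; apply: SpU; apply: L3.
Qed.

Lemma L2 j k x y v : (j + k = n)%N -> N (x - y) -> Span (Vg j) v ->
  Span Kg ((GG x k - GG y k) * v).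
Proof.
move=> hjk hxy; elim=> [|a b _ ha _ hb|r g [w ->]].
- by rewrite mulr0; apply: Sp0.
- by rewrite mulrDr; apply: SpD.
rewrite mulrCA; apply: SpU.
set z := x - y.
have ex : x = y + 1%:R *: z by rewrite mulr1n scale1r addrC subrK.
rewrite ex Lexp big_ord_recl /= expr0 mul1r subn0 G0 mulr1 (addrC (GG y k)) addrK mulr_suml.
apply: Spsum => i _.
have hik : (i < k)%N := ltn_ord i.
rewrite mulr1n expr1n mul1r -mulrA [GG z _ * _]mulrC mulrA.
apply: L3' => //; first by apply/andP; split => //; rewrite /bump /=; lia.
have e : (k - bump 0 i + j = n - bump 0 i)%N by rewrite /bump /=; lia.
rewrite -e; apply: L4; rewrite e; apply: UH_le hu; exact: leq_subr.
Qed.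

Inductive J : Qn -> Prop :=
| J0 : J 0
| JD p q : J p -> J q -> J (p + q)
| Jg (a : Qn) x y k : N (x - y) -> J (a * (GG x k - GG y k)).

Lemma Jmul b p : J p -> J (b * p).
Proof.
elim=> [|p1 p2 _ h1 _ h2|a x y k h].
- by rewrite mulr0; apply: J0.
- by rewrite mulrDr; apply: JD.
- by rewrite mulrA; apply: Jg.
Qed.

Lemma JN p : J p -> J (- p).
Proof. by move=> h; rewrite -mulN1r; apply: Jmul. Qed.

Lemma Jeq t u : deq N0 t u -> J (cl t - cl u).
Proof. by move/(cls_eq N0) => ->; rewrite subrr; apply: J0. Qed.

Lemma deq_J t u : deq N t u -> J (cl t - cl u).
Proof.
elim.
all: try (by move=> *; apply: Jeq; first [apply: deq_addA | apply: deq_addC | apply: deq_add0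
  | apply: deq_addN | apply: deq_mulA | apply: deq_mulC | apply: deq_mul1 | apply: deq_mulDl
  | apply: deq_scaleA | apply: deq_scale1 | apply: deq_scaleDl | apply: deq_scaleDr
  | apply: deq_scaleMl | apply: deq_gen0 | apply: deq_genZ | apply: deq_genM | apply: deq_genD]).
- by move=> t0; rewrite subrr; apply: J0.
- by move=> t0 u0 _ h; rewrite -opprB; apply: JN.
- move=> t0 u0 v0 _ h1 _ h2.
  have -> : cl t0 - cl v0 = (cl t0 - cl u0) + (cl u0 - cl v0) by rewrite addrA subrK.
  by apply: JD.
- move=> t0 t1 u0 u1 _ h1 _ h2; rewrite !clsD.
  have -> : cl t0 + cl u0 - (cl t1 + cl u1) = (cl t0 - cl t1) + (cl u0 - cl u1).
    by rewrite opprD addrACA.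
  by apply: JD.
- by move=> t0 t1 _ h; rewrite !clsN opprK addrC -opprB; apply: JN.
- move=> t0 t1 u0 u1 _ h1 _ h2; rewrite !clsM.
  have -> : cl t0 * cl u0 - cl t1 * cl u1 = (cl t0 - cl t1) * cl u0 + cl t1 * (cl u0 - cl u1).
    by rewrite mulrBl mulrBr addrA subrK.
  by apply: JD; [rewrite mulrC|]; apply: Jmul.
- by move=> r t0 t1 _ h; rewrite !clsZ -mulrBr; apply: Jmul.
- by move=> x y k h; rewrite -[X in J X]mul1r; apply: Jg.
Qed.

Definition PhiQ (q : Qn) := Phi (qrepr q).

Lemma PhiQ_cls t : PhiQ (cl t) = Phi t.
Proof. by apply: Phi_deq; apply: qrepr_cls. Qed.

Lemma PhiQD p q : PhiQ (p + q) = PhiQ p + PhiQ q.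
Proof.
by elim/(qtind (N := N0)): p => a; elim/(qtind (N := N0)): q => b; rewrite -clsD !PhiQ_cls.
Qed.
Lemma PhiQM p q : PhiQ (p * q) = PhiQ p * PhiQ q.
Proof.
by elim/(qtind (N := N0)): p => a; elim/(qtind (N := N0)): q => b; rewrite -clsM !PhiQ_cls.
Qed.
Lemma PhiQN p : PhiQ (- p) = - PhiQ p.
Proof. by elim/(qtind (N := N0)): p => a; rewrite -clsN !PhiQ_cls. Qed.
Lemma PhiQ0 : PhiQ 0 = 0.
Proof. by rewrite -cls0 PhiQ_cls. Qed.
Lemma PhiQG x k : PhiQ (GG x k) = (GG x k : Qn) *: 'X^k.
Proof. by rewrite PhiQ_cls. Qed.

Lemma J_K q : J q -> Span Kg ((PhiQ q)`_n).
Proof.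
elim=> [|p1 p2 _ h1 _ h2|a x y k hxy].
- by rewrite PhiQ0 coef0; apply: Sp0.
- by rewrite PhiQD coefD; apply: SpD.
rewrite PhiQM PhiQD PhiQN !PhiQG -scalerBl -scalerAr coefZ coefMXn.
case: ltnP => hk; first by rewrite mulr0; apply: Sp0.
apply: (@L2 (n - k)) => //; first by rewrite subnK.
by apply: coefV; apply: UH_le hu; apply: leq_subr.
Qed.

Lemma part2 t : dhom n t -> deq N t DZero -> Span Kg (cl t).
Proof.
move=> ht /deq_J; rewrite cls0 subr0 => /J_K.
by rewrite PhiQ_cls (Phi_hom ht) coefZ coefXn eqxx mulr1.
Qed.

Lemma extract2 q : Span Kg q ->
  exists s : seq (R * M * M), (forall p, p \in s -> N p.2) /\
    q = cl (dsum [seq DScale p.1.1 (DAdd (DGen (p.1.2 + p.2) n) (DOpp (DGen p.1.2 n))) | p <- s]).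
Proof.
elim=> [|a b _ [s1 [hs1 ->]] _ [s2 [hs2 ->]]|r g [x [y [hy ->]]]].
- by exists [::].
- exists (s1 ++ s2); split; last by rewrite !cls_dsum big_cat.
  by move=> p; rewrite mem_cat => /orP[]; [apply: hs1 | apply: hs2].
- exists [:: (r, x, y)]; split; first by move=> p; rewrite inE => /eqP ->.
  by rewrite cls_dsum big_seq1 clsZ clsD clsN.
Qed.

End P2.
End NZ.

Lemma deq0_N (N : M -> Prop) t u : deq N0 t u -> deq N t u.
Proof.
elim.
all: try (by move=> *; first [apply: deq_addA | apply: deq_addC | apply: deq_add0
  | apply: deq_addN | apply: deq_mulA | apply: deq_mulC | apply: deq_mul1 | apply: deq_mulDl
  | apply: deq_scaleA | apply: deq_scale1 | apply: deq_scaleDl | apply: deq_scaleDr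
  | apply: deq_scaleMl | apply: deq_gen0 | apply: deq_genZ | apply: deq_genM | apply: deq_genD]).
- by move=> t0; apply: deq_refl.
- by move=> ? ? _ h; apply: deq_sym.
- by move=> ? ? ? _ h1 _ h2; apply: deq_trans h1 h2.
- by move=> ? ? ? ? _ h1 _ h2; apply: deq_add.
- by move=> ? ? _ h; apply: deq_opp.
- by move=> ? ? ? ? _ h1 _ h2; apply: deq_mul.
- by move=> ? ? ? _ h; apply: deq_scale.
- move=> x y k h; have -> : x = y by apply/eqP; rewrite -subr_eq0 h.
  by apply: deq_refl.
Qed.

Lemma back (N : M -> Prop) n t (s : seq (R * M * M)) :
  (forall p, p \in s -> N p.2) ->
  gamma_eq t (dsum [seq DScale p.1.1 (DAdd (DGen (p.1.2 + p.2) n) (DOpp (DGen p.1.2 n))) | p <- s]) ->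
  deq N t DZero.
Proof.
move=> hs /(deq0_N N) /(cls_eq N) e; apply/(cls_eq N); rewrite e cls_dsum cls0.
apply: big1_seq => -[[r x] y] /andP[_ hp] /=.
have e1 : cls N (DGen (x + y) n) = cls N (DGen x n).
  by apply/cls_eq; apply: deq_genN; rewrite (addrC x y) addrK; apply: (hs _ hp).
by rewrite clsZ clsD clsN e1 subrr mulr0.
Qed.

Lemma triv (t : term) : (1 : R) = 0 -> gamma_eq t DZero.
Proof.
move=> h1; apply/(cls_eq N0); rewrite cls0 -[cls N0 t]mul1r -(qi1 N0) h1 qi0 mul0r.
by [].
Qed.

Lemma UH_fact n : (exists u : R, u * ((n.-1)`!)%:R = 1) -> UH n.
Proof.
move=> [u hu] k /andP[k0 kn].
have : (k %| (n.-1)`!)%N by apply: dvdn_fact; apply/andP; split => //; lia.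
case/dvdnP => q hq; exists (u * q%:R).
by rewrite -mulrA -natrM -hq.
Qed.

End Main.

Unset Implicit Arguments.

Theorem lemma6p1 (R : comPzRingType) (M : lmodType R) (n : nat) :
  (0 < n)%N ->
  (exists u : R, u * ((n.-1)`!)%:R = 1) ->
  (forall t : dterm R M, dhom n t ->
     exists s : seq (R * M),
       gamma_eq t (dsum [seq DScale p.1 (DGen p.2 n) | p <- s])) /\
  (forall N : M -> Prop, is_submodule N ->
     forall t : dterm R M, dhom n t ->
       (gamma_quot_eq N t DZero <->
        exists s : seq (R * M * M),
          (forall p, p \in s -> N p.2) /\
          gamma_eq t (dsum [seq DScale p.1.1
                                  (DAdd (DGen (p.1.2 + p.2) n) (DOpp (DGen p.1.2 n)))
                           | p <- s]))).
Proof.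
move=> hn hfac; have hu := UH_fact hfac.
case: (boolP ((1 : R) == 0)) => [/eqP h1 | hR].
- split.
  + by move=> t _; exists [::]; apply: triv.
  + move=> N hN t ht; split.
    * by move=> _; exists [::]; split => //; apply: triv.
    * by move=> [s [hs e]]; apply: back hs e.
- split.
  + move=> t ht; have [s e] := extract1 (part1 hR hu ht).
    by exists s; apply/(cls_eq _).
  + move=> N hN t ht; split.
    * move=> h; have [s [hs e]] := extract2 (part2 hR hN hn hu ht h).
      by exists s; split => //; apply/(cls_eq _).
    * by move=> [s [hs e]]; apply: back hs e.
Qed.
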